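(* Let $G$ be a finite permutation group acting quasi-transitively on a finite set $\Omega$, with $G$-orbits $\Delta_1,\dots,\Delta_r$ where $r>1$. Then for each $i$, $G$ acts on $\Delta_i$ as a primitive $\frac{3}{2}$-transitive permutation group.
   Context: A finite permutation group $G$ on a finite set $\Omega$ is called quasi-transitive if there is a natural number $t>1$ such that $|G_{\alpha\beta}|=t$ for all two-element subsets $\{\alpha,\beta\}\subseteq\Omega$, where $G_{\alpha\beta}$ denotes the pointwise stabiliser of $\alpha$ and $\beta$ in $G$. A group acting on a set $\Delta$ is $\frac{3}{2}$-transitive if it is transitive on $\Delta$ and, for $\alpha\in\Delta$, all orbits of the point stabiliser $G_\alpha$ on $\Delta\setminus\{\alpha\}$ have the same size. *)

(* Defs.v *)
From mathcomp Require Import all_boot all_fingroup all_solvable.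
Set Implicit Arguments. Unset Strict Implicit. Unset Printing Implicit Defensive.
Local Open Scope group_scope.

(* Omega is the whole finite type T; G is a permutation group on T acting
   naturally via the action 'P. *)

Definition stab2 (T : finType) (G : {group {perm T}}) (a b : T) : {set {perm T}} :=
  'C_G[a | 'P] :&: 'C_G[b | 'P].

Definition quasi_transitive (T : finType) (G : {group {perm T}}) : Prop :=
  exists t : nat, (1 < t)%N /\
    forall a b : T, a != b -> #|stab2 G a b| = t.

Definition Gorbits (T : finType) (G : {group {perm T}}) : {set {set T}} :=
  orbit 'P G @: [set: T].

Definition three_halves_transitive (T : finType) (G : {group {perm T}})
    (D : {set T}) : Prop :=
  [transitive G, on D | 'P] /\
  forall a, a \in D -> forall x y, x \in D :\ a -> y \in D :\ a ->
    #|orbit 'P 'C_G[a | 'P] x| = #|orbit 'P 'C_G[a | 'P] y|.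

(* Main.v *)
Require Import Defs.
From mathcomp Require Import all_boot all_fingroup all_solvable.
From mathcomp Require Import zify.
Set Implicit Arguments. Unset Strict Implicit. Unset Printing Implicit Defensive.
Local Open Scope group_scope.

Lemma stab2E (T : finType) (G : {group {perm T}}) a b :
  stab2 G a b = 'C_('C_G[a | 'P])[b | 'P].
Proof. by apply/setP=> g; rewrite !inE; case: (g \in G). Qed.

Lemma stab2C (T : finType) (G : {group {perm T}}) a b :
  stab2 G a b = stab2 G b a.
Proof. by rewrite /stab2 setIC. Qed.

Lemma orb_t (T : finType) (G : {group {perm T}}) t a b :
  (forall a b : T, a != b -> #|stab2 G a b| = t) -> a != b ->
  (#|orbit 'P 'C_G[a | 'P] b| * t = #|'C_G[a | 'P]|)%N.
Proof.
move=> Ht ab; rewrite -(Ht _ _ ab) stab2E; exact: card_orbit_stab.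
Qed.

Lemma L_div (T : finType) (A : {group {perm T}}) (S : {set T}) k :
  [acts A, on S | 'P] -> (forall z, z \in S -> #|orbit 'P A z| = k) ->
  (k %| #|S|)%N.
Proof.
move=> aS hk; rewrite (card_uniform_partition (n := k) _ (orbit_partition aS)).
  exact: dvdn_mull.
by move=> X /imsetP[z zS ->]; apply: hk.
Qed.

Lemma card_stab_eq (T : finType) (G : {group {perm T}}) x y :
  y \in orbit 'P G x -> #|'C_G[x | 'P]| = #|'C_G[y | 'P]|.
Proof.
move=> yx.
have e : orbit 'P G y = orbit 'P G x by apply/orbit_eqP.
have h1 := card_orbit_stab 'P G x. have h2 := card_orbit_stab 'P G y.
rewrite e in h2.
have p : (0 < #|orbit 'P G x|)%N by apply/card_gt0P; exists x; exact: orbit_refl.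
apply/eqP; rewrite -(eqn_pmul2l p) h1 h2 //.
Qed.

Lemma inC1 (T : finType) (G : {group {perm T}}) x g :
  (g \in 'C_G[x | 'P]) = (g \in G) && (g x == x).
Proof.
apply/idP/andP => [/setIP[gG /astab1P h] | [gG /eqP h]].
  by split=> //; apply/eqP; exact: h.
by apply/setIP; split=> //; apply/astab1P.
Qed.

Lemma PE (T : finType) (x : T) (g : {perm T}) : ('P)%act x g = g x.
Proof. by []. Qed.

Lemma inC1' (T : finType) (x : T) (g : {perm T}) :
  (g \in 'C[x | 'P]) = (g x == x).
Proof. by apply/astab1P/eqP. Qed.

Lemma NY (T : finType) (G : {group {perm T}}) (Q : {set {set T}})
  (tQ : trivIset Q) (aQ : [acts G, on Q | 'P^*]) Y z g :
  Y \in Q -> z \in Y -> g \in G -> g z = z -> g \in 'N(Y | 'P).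
Proof.
move=> QY zY gG gz.
rewrite -astab1_set; apply/astab1P.
have QgY : ('P^* Y g) \in Q by rewrite (acts_act aQ gG).
have := def_pblock tQ QgY (mem_setact 'P g zY).
rewrite PE gz => h.
by rewrite -[RHS](def_pblock tQ QY zY) h.
Qed.

Lemma blockfix (T : finType) (G : {group {perm T}}) t (Q : {set {set T}}) (D : {set T})
  (Ht : forall a b : T, a != b -> #|stab2 G a b| = t) (t0 : (0 < t)%N)
  (tQ : trivIset Q) (cQ : cover Q = D) (aQ : [acts G, on Q | 'P^*])
  (hD : forall u v, u \in D -> v \in D -> #|'C_G[u|'P]| = #|'C_G[v|'P]|)
  x y : x \in D -> y \in D -> x \notin pblock Q y ->
  forall z g, z \in pblock Q y -> g \in stab2 G x y -> g z = z.
Proof.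
move=> xD yD xY.
set Y := pblock Q y.
have yY : y \in Y by rewrite mem_pblock cQ.
have QY : Y \in Q by rewrite pblock_mem // cQ.
have xy : x != y by apply: contraNneq xY => ->.
set k := #|orbit 'P 'C_G[x|'P] y|.
have hk : (k * t = #|'C_G[y|'P]|)%N by rewrite /k (orb_t Ht xy) (hD _ _ xD yD).
have kdiv : (k %| #|Y :\ y|)%N.
  apply: (@L_div _ 'C_G[y|'P]%G).
    apply/subsetP=> g gGy; apply/astabsP=> z.
    move: gGy; rewrite inC1 => /andP[gG /eqP gy].
    rewrite !inE (astabs_act _ (NY tQ aQ QY yY gG gy)) PE.
    congr andb; rewrite -{1}gy; by rewrite (inj_eq perm_inj).
  move=> z; rewrite inE => /andP[zy zY].
  apply/eqP; rewrite -(eqn_pmul2r t0) hk (orb_t Ht) //; by move: zy; rewrite inE eq_sym.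
set K := 'N_('C_G[x|'P])(Y | 'P).
set e := #|orbit 'P K y|.
have Kz : forall z, z \in Y -> (#|orbit 'P K z| * t = #|K|)%N.
  move=> z zY.
  have xz : x != z by apply: contraNneq xY => ->.
  rewrite -(card_orbit_stab 'P K z) -(Ht _ _ xz); congr muln.
  apply: eq_card => g; rewrite /stab2.
  apply/idP/idP.
    case/setIP=> gx gzz; move: (gzz); rewrite inC1 => /andP[gG /eqP gz].
    apply/setIP; split; last by case/setIP: gzz.
    apply/setIP; split=> //; exact: (NY tQ aQ QY zY gG gz).
  case/setIP=> /setIP[gx _] gz; apply/setIP; split=> //.
  by apply/setIP; split=> //; case/setIP: gx.
have ediv : (e %| #|Y|)%N.
  apply: (@L_div _ K%G); first exact: subsetIr.
  move=> z zY; apply/eqP; rewrite -(eqn_pmul2r t0) (Kz _ zY) Kz //.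
have ek : (e %| k)%N.
  rewrite -(dvdn_pmul2r t0) Kz // hk -(hD _ _ xD yD); apply: cardSg; exact: subsetIl.
have e1 : e = 1%N.
  have hY : #|Y| = (#|Y :\ y|).+1 by rewrite (cardsD1 y Y) yY.
  apply/eqP; rewrite -dvdn1.
  have h1 := dvdn_trans ek kdiv.
  by move: ediv; rewrite hY -addn1 dvdn_addr.
move=> z g zY gS.
have oz : #|orbit 'P K z| = 1%N.
  apply/eqP; rewrite -(eqn_pmul2r t0) Kz // -e1 Kz //.
have gK : g \in K.
  case/setIP: gS => gx; rewrite inC1 => /andP[gG /eqP gy].
  by apply/setIP; split=> //; exact: (NY tQ aQ QY yY gG gy).
have := mem_orbit 'P z gK; rewrite (card_orbit1 oz) inE PE => /eqP //.
Qed.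

Lemma pblockJ (T : finType) (G : {group {perm T}}) (Q : {set {set T}})
  (tQ : trivIset Q) (aQ : [acts G, on Q | 'P^*]) Y w g :
  Y \in Q -> w \in Y -> g \in G -> pblock Q (g w) = 'P^* Y g.
Proof.
move=> QY wY gG.
have QgY : ('P^* Y g) \in Q by rewrite (acts_act aQ gG).
exact: (def_pblock tQ QgY (mem_setact 'P g wY)).
Qed.

Lemma pblock_sym (T : finType) (Q : {set {set T}}) (tQ : trivIset Q) x w :
  x \in cover Q -> w \in cover Q -> (w \in pblock Q x) = (x \in pblock Q w).
Proof.
move=> xc wc; rewrite -(eq_pblock _ tQ xc) -(eq_pblock _ tQ wc).
by rewrite eq_sym.
Qed.

Lemma stab2_sub (T : finType) (G : {group {perm T}}) a b g :
  g \in stab2 G a b -> [/\ g \in G, g a = a & g b = b].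
Proof.
case/setIP; rewrite !inC1 => /andP[gG /eqP ->] /andP[_ /eqP ->]; by split.
Qed.

Lemma stab2_in (T : finType) (G : {group {perm T}}) a b g :
  g \in G -> g a = a -> g b = b -> g \in stab2 G a b.
Proof.
by move=> gG ga gb; apply/setIP; rewrite !inC1 gG ga gb !eqxx.
Qed.

Lemma Cprime (T : finType) (G : {group {perm T}}) t (Q : {set {set T}}) (D : {set T})
  (Ht : forall a b : T, a != b -> #|stab2 G a b| = t) (t0 : (0 < t)%N)
  (tQ : trivIset Q) (cQ : cover Q = D) (aQ : [acts G, on Q | 'P^*])
  (hD : forall u v, u \in D -> v \in D -> #|'C_G[u|'P]| = #|'C_G[v|'P]|)
  x y w : x \in D -> y \in pblock Q x -> y != x -> w \in D -> w \notin pblock Q x ->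
  stab2 G x y = stab2 G x w.
Proof.
move=> xD yB yx wD wB.
have xw : x \notin pblock Q w by rewrite -pblock_sym ?cQ.
have sub : stab2 G x w \subset stab2 G x y.
  apply/subsetP=> g gS.
  have [gG gx gw] := stab2_sub gS.
  have gS' : g \in stab2 G w x by rewrite stab2C.
  have gy := blockfix Ht t0 tQ cQ aQ hD wD xD wB yB gS'.
  exact: stab2_in.
have xw' : x != w by apply: contraNneq wB => <-; rewrite mem_pblock cQ.
apply/esym/eqP; rewrite eqEcard sub /= (Ht _ _ xw') Ht // eq_sym //.
Qed.

Lemma Wlem (T : finType) (G : {group {perm T}}) t (Q : {set {set T}}) (D : {set T})
  (Ht : forall a b : T, a != b -> #|stab2 G a b| = t) (t0 : (0 < t)%N)
  (tQ : trivIset Q) (cQ : cover Q = D) (aQ : [acts G, on Q | 'P^*])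
  (hD : forall u v, u \in D -> v \in D -> #|'C_G[u|'P]| = #|'C_G[v|'P]|)
  x y0 z0 : x \in D -> y0 \in pblock Q x -> y0 != x -> z0 \in D -> z0 \notin pblock Q x ->
  forall y, y \in D -> y != x -> forall w g, w \in D -> g \in stab2 G x y -> g w = w.
Proof.
move=> xD y0B y0x z0D z0B.
have CP := Cprime Ht t0 tQ cQ aQ hD.
have eqS : forall y, y \in D -> y != x -> stab2 G x y = stab2 G x z0.
  move=> y yD yx; case: (boolP (y \in pblock Q x)) => yB.
    exact: CP.
  by rewrite -(CP _ _ _ xD y0B y0x yD yB) (CP _ _ _ xD y0B y0x z0D z0B).
move=> y yD yx w g wD; rewrite (eqS _ yD yx) => gS.
case: (boolP (w \in pblock Q x)) => wB.
  have x0 : x \notin pblock Q z0 by rewrite -pblock_sym ?cQ.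
  by apply: (blockfix Ht t0 tQ cQ aQ hD z0D xD z0B wB); rewrite stab2C.
have wx : w != x by apply: contraNneq wB => ->; rewrite mem_pblock cQ.
by move: gS; rewrite -(eqS _ wD wx) => /stab2_sub [].
Qed.

Lemma sum_in (T : finType) (A B : {set T}) :
  (\sum_(h in A) (h \in B) = #|A :&: B|)%N.
Proof.
rewrite -sum1_card big_mkcond /= [RHS]big_mkcond /=; apply: eq_bigr => i _.
by rewrite in_setI; case: (i \in A); case: (i \in B).
Qed.

Lemma actsD1 (T : finType) (A : {group {perm T}}) (S : {set T}) b :
  A \subset 'N(S | 'P) -> A \subset 'C[b | 'P] -> [acts A, on S :\ b | 'P].
Proof.
move=> aS aB; apply/subsetP=> g gA; apply/astabsP=> z.
have gb : g b = b by apply/eqP; rewrite -inC1'; exact: (subsetP aB).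
rewrite !inE (astabs_act _ (subsetP aS g gA)) PE.
congr andb; rewrite -{1}gb; by rewrite (inj_eq perm_inj).
Qed.

Lemma arith1 o s t v : (o*s*t <= s*t + (o*s-1)*v)%N -> (2*v <= t)%N -> (1 <= v)%N -> (1<=s)%N -> (1 <= o)%N -> o = 1%N.
Proof. move=> *. nia. Qed.

Lemma inFix (T : finType) (D : {set T}) (h : {perm T}) a :
  a \in 'Fix_(D | 'P)[h] -> a \in D /\ h a = a.
Proof. by case/setIP=> aD /afix1P; rewrite PE. Qed.

Lemma core (T : finType) (G : {group {perm T}}) t (D : {set T}) x0
  (Ht : forall a b : T, a != b -> #|stab2 G a b| = t) (t1 : (1 < t)%N)
  (hDo : D = orbit 'P G x0)
  (SE : forall a c, a \in D -> c \in D -> a != c ->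
          forall w g, w \in D -> g \in stab2 G a c -> g w = w)
  (n2 : (1 < #|D|)%N) : False.
Proof.
have t0 : (0 < t)%N by apply: ltnW.
have x0D : x0 \in D by rewrite hDo orbit_refl.
have [y yD yx] : exists2 y, y \in D & y != x0.
  have : (0 < #|D :\ x0|)%N by move: n2; rewrite (cardsD1 x0 D) x0D; lia.
  by case/card_gt0P=> y; rewrite !inE => /andP[? ?]; exists y.
have xy : x0 != y by rewrite eq_sym.
set S0 := stab2 G x0 y.
have SEq : forall a c, a \in D -> c \in D -> a != c -> stab2 G a c = S0.
  move=> a c aD cD ac; apply/eqP; rewrite eqEcard (Ht _ _ ac) /S0 (Ht _ _ xy) leqnn andbT.
  apply/subsetP=> g gS; have [gG _ _] := stab2_sub gS.
  by apply: stab2_in => //; apply: (SE a c aD cD ac).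
have [g gS g1] : exists2 g, g \in S0 & g != 1.
  have : (1 < #|S0|)%N by rewrite /S0 (Ht _ _ xy).
  case/card_gt1P=> g1 [g2 [g1S g2S g12]].
  case: (eqVneq g1 1) => [e1|n1]; last by exists g1.
  by exists g2; rewrite // -e1 eq_sym.
have [gG _ _] := stab2_sub (gS : g \in stab2 G x0 y).
have [be gbe] : exists be, g be != be.
  apply/existsP; apply: contraR g1; rewrite negb_exists => /forallP h.
  by apply/eqP/permP=> b; rewrite perm1; apply/eqP; move: (h b); rewrite negbK.
have beD : be \notin D.
  by apply: contra gbe => beD; apply/eqP; exact: (SE x0 y x0D yD xy).
set Gb := 'C_G[be | 'P].
have aGD : G \subset 'N(D | 'P) by rewrite hDo; apply: acts_orbit; exact: subsetT.
have aGbD : [acts Gb, on D | 'P] by apply: subset_trans aGD; exact: subsetIl.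
set s := #|orbit 'P Gb x0|.
have hs : (s * t = #|Gb|)%N by apply: orb_t => //; apply: contraNneq beD => ->.
have hsa : forall a, a \in D -> #|orbit 'P Gb a| = s.
  move=> a aD; apply/eqP; rewrite -(eqn_pmul2r t0) hs orb_t //.
  by apply: contraNneq beD => ->.
set o := #|orbit 'P Gb @: D|.
have hn : #|D| = (o * s)%N.
  apply: card_uniform_partition (orbit_partition aGbD).
  by move=> X /imsetP[a aD ->]; apply: hsa.
have FC := @Frobenius_Cauchy _ _ _ ('P)%act Gb%G D aGbD.
set nu := #|Gb :&: S0|.
have bound : (\sum_(h in Gb) #|'Fix_(D | 'P)[h]| <= #|Gb| + (#|D| - 1) * nu)%N.
  apply: (@leq_trans (\sum_(h in Gb) (1 + (#|D| - 1) * (h \in S0)))%N).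
    apply: leq_sum => h hGb.
    case: (boolP (h \in S0)) => hS.
      have : (#|'Fix_(D | 'P)[h]| <= #|D|)%N by apply: subset_leq_card; exact: subsetIl.
      by rewrite muln1 add1n subn1 prednK // ltnW.
    rewrite muln0 addn0 leqNgt; apply/negP => /card_gt1P [a [c [aF cF ac]]].
    have [aD ha] := inFix aF; have [cD hc] := inFix cF.
    have hG : h \in G by move: hGb; rewrite inC1 => /andP[].
    by move: hS; rewrite -(SEq a c aD cD ac) (stab2_in hG ha hc).
  by rewrite big_split /= sum1_card -big_distrr /= sum_in.
have nu1 : (1 <= nu)%N.
  by apply/card_gt0P; exists 1; rewrite inE group1 /S0; apply: stab2_in; rewrite ?group1 ?perm1.
have nut : (2 * nu <= t)%N.
  have dv : (nu %| t)%N.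
    rewrite /nu /S0 stab2E -(Ht _ _ xy) stab2E.
    exact: (cardSg (subsetIr ('C_G[be | 'P]) ('C_('C_G[x0 | 'P])[y | 'P]))).
  have lt : (nu < t)%N.
    rewrite -(Ht _ _ xy) -/S0; apply: proper_card; rewrite properE subsetIr /=.
    apply/negP=> /subsetP /(_ g gS); rewrite inE => /andP[]; rewrite inC1 => /andP[_].
    by rewrite (negbTE gbe).
  case/dvdnP: dv => q hq; move: lt; rewrite hq; case: q {hq} => [|[|q]] //=; first by rewrite mul1n ltnn.
  by move=> _; rewrite leq_mul2r; apply/orP; right.
have sp : (1 <= s)%N by apply/card_gt0P; exists x0; exact: orbit_refl.
have o1 : o = 1%N.
  have op : (1 <= o)%N by rewrite lt0n; apply/eqP => o0; move: n2; rewrite hn o0.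
  move: bound; rewrite FC -hs hn => bnd.
  rewrite -/o mulnA in bnd; exact: (arith1 bnd nut nu1 sp op).
have hGb : #|Gb| = (#|D| * t)%N by rewrite -hs hn o1 mul1n.
set m := #|orbit 'P G be|.
have hm : (#|'C_G[x0 | 'P]| = m * t)%N.
  have h1 := card_orbit_stab ('P)%act G be. have h2 := card_orbit_stab ('P)%act G x0.
  rewrite -/Gb hGb -hDo in h1 h2; rewrite -/m in h1.
  by apply/eqP; rewrite -(eqn_pmul2l (ltnW n2)) h2 -h1 mulnCA.
have gbO : g be \in orbit 'P G be :\ be.
  by rewrite !inE gbe; exact: (mem_orbit 'P be gG).
have hmD : #|orbit 'P G be :\ be| = (m - 1)%N.
  by rewrite /m (cardsD1 be (orbit 'P G be)) orbit_refl add1n subn1.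
have d1 : (#|D| %| m - 1)%N.
  rewrite -hmD; apply: (@L_div _ Gb%G).
    apply: actsD1; last exact: subsetIr.
    apply: subset_trans (subsetIl _ _) _; apply: acts_orbit; exact: subsetT.
  move=> z; rewrite inE => /andP[zb _]; apply/eqP; rewrite -(eqn_pmul2r t0) -hGb.
  by rewrite orb_t //; move: zb; rewrite inE eq_sym.
have d2 : (m %| #|D| - 1)%N.
  have -> : (#|D| - 1 = #|D :\ x0|)%N by rewrite {1}(cardsD1 x0 D) x0D add1n subn1.
  apply: (@L_div _ 'C_G[x0 | 'P]%G).
    apply: actsD1; last exact: subsetIr.
    by apply: subset_trans aGD; exact: subsetIl.
  move=> z; rewrite inE => /andP[zb _]; apply/eqP; rewrite -(eqn_pmul2r t0)  -hm.
  by rewrite orb_t //; move: zb; rewrite inE eq_sym.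
have mp : (0 < m - 1)%N by rewrite -hmD; apply/card_gt0P; exists (g be).
have l1 := dvdn_leq mp d1.
have l2 : (m <= #|D| - 1)%N by apply: dvdn_leq => //; rewrite subn_gt0.
move: l1 l2 n2; clear; lia.
Qed.

Theorem mainTheorem3 (T : finType) (G : {group {perm T}}) :
  quasi_transitive G ->
  (1 < #|Gorbits G|)%N ->
  forall D : {set T}, D \in Gorbits G ->
    [primitive G, on D | 'P] /\ three_halves_transitive G D.
Proof.
move=> [t [t1 Ht]] nO D /imsetP[x0 _ hDo].
have t0 : (0 < t)%N by apply: ltnW.
have trD : [transitive G, on D | 'P] by rewrite hDo; exact: atrans_orbit.
have hD : forall u v, u \in D -> v \in D -> #|'C_G[u|'P]| = #|'C_G[v|'P]|.
  move=> u v; rewrite hDo => uD vD.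
  by rewrite -(card_stab_eq uD) -(card_stab_eq vD).
split; last first.
  split=> // a aD x y; rewrite !inE => /andP[xa _] /andP[ya _].
  by apply/eqP; rewrite -(eqn_pmul2r t0) !orb_t // eq_sym.
rewrite /primitive trD /=; apply/negP => /existsP[Q /and3P[pQ aQ /andP[Q1 QD]]].
case/and3P: (pQ) => /eqP cQ tQ nQ0.
have Ez : forall x, x \in D -> exists2 z, z \in D & z \notin pblock Q x.
  move=> x xD; case/card_gt1P: Q1 => Y1 [Y2 [Y1Q Y2Q Y12]].
  have [Y YQ YB] : exists2 Y, Y \in Q & Y != pblock Q x.
    case: (eqVneq Y1 (pblock Q x)) => e; last by exists Y1.
    by exists Y2; rewrite // -e eq_sym.
  have : Y != set0 by apply: contraNneq nQ0 => <-.
  case/set0Pn => z zY; exists z.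
    by rewrite -cQ; apply/bigcupP; exists Y.
  apply: contra YB => zB.
  by rewrite -(def_pblock tQ YQ zY) (same_pblock tQ zB).
have Ey : forall x, x \in D -> exists2 y, y \in pblock Q x & y != x.
  have [Y YQ Y2] : exists2 Y, Y \in Q & (1 < #|Y|)%N.
    case: (boolP [exists Y in Q, 1 < #|Y|]) => [/exists_inP [Y YQ Y2] | ].
      by exists Y.
    rewrite negb_exists_in => /forall_inP h; exfalso.
    have : (#|D| <= #|Q|)%N.
      rewrite (card_partition pQ) -sum1_card; apply: leq_sum => A AQ.
      by rewrite leqNgt h.
    by rewrite leqNgt QD.
  move=> x xD; case/card_gt1P: Y2 => u [v [uY vY uv]].
  have uD : u \in D by rewrite -cQ; apply/bigcupP; exists Y.
  have [g gG xe] := atransP2 trD uD xD.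
  exists (g v).
    by rewrite xe PE (pblockJ tQ aQ YQ uY gG); exact: (mem_setact 'P g vY).
  by rewrite xe PE (inj_eq perm_inj) eq_sym.
have SE : forall a c, a \in D -> c \in D -> a != c ->
          forall w g, w \in D -> g \in stab2 G a c -> g w = w.
  move=> a c aD cD ac w g wD gS.
  have [y0 y0B y0a] := Ey a aD; have [z0 z0D z0B] := Ez a aD.
  by apply: (Wlem Ht t0 tQ cQ aQ hD aD y0B y0a z0D z0B cD _ wD gS); rewrite eq_sym.
exact: (core Ht t1 hDo SE (ltn_trans Q1 QD)).
Qed.
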